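(* Let $\mathrm{int}(\Delta^n):=\{\mathbf{p}\in\Delta^n:p_i>0\ \forall i\}$. Each of the following proper scoring rules on the forecast domain $\mathcal{D}=\mathrm{int}(\Delta^n)$ has convex exposure: (i) the logarithmic scoring rule $s(\mathbf{p};j)=\ln p_j$ (with $G(\mathbf{p})=\sum_j p_j\ln p_j$); (ii) the scoring rule with $G(\mathbf{p})=-\sum_j p_j^{\gamma}$ for $\gamma\in(0,1)$, and the scoring rule with $G(\mathbf{p})=\sum_j p_j^{\gamma}$ for $\gamma<0$; (iii) the scoring rule with $G(\mathbf{p})=-\sum_j\ln p_j$; (iv) the scoring rule with $G(\mathbf{p})=-\prod_j p_j^{1/n}$.
   Context: A scoring rule ''given by'' a differentiable strictly convex $G$ on $\mathcal{D}$ is $s(\mathbf{p};j)=G(\mathbf{p})+\langle\nabla G(\mathbf{p}),\delta_j-\mathbf{p}\rangle$, where $\delta_j$ is the $j$-th standard basis vector; this is a proper scoring rule with expected reward function $G$. The exposure function is $\mathbf{g}=\nabla G$, with values understood modulo translation by the all-ones vector (equivalently, projected onto $\{\mathbf{x}:\sum_i x_i=0\}$). A scoring rule has convex exposure if the range of $\mathbf{g}$ is a convex set. *)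

(* Defs.v *)
From HB Require Import structures.
From mathcomp Require Import all_boot all_order all_algebra.
From mathcomp Require Import all_classical all_reals all_analysis.
Set Implicit Arguments. Unset Strict Implicit. Unset Printing Implicit Defensive.
Import Order.TTheory GRing.Theory Num.Theory.
Import numFieldNormedType.Exports.
Local Open Scope classical_set_scope.
Local Open Scope ring_scope.

Definition int_simplex (R : realType) (n : nat) : set 'rV[R]_n :=
  [set p | (forall i, 0 < p ord0 i) /\ \sum_(i < n) p ord0 i = 1].

Definition grad (R : realType) (n : nat) (G : 'rV[R]_n -> R) (p : 'rV[R]_n)
  : 'rV[R]_n :=
  \row_(j < n) 'D_(delta_mx 0 j) G p.

Definition proj_sum0 (R : realType) (n : nat) (x : 'rV[R]_n) : 'rV[R]_n :=
  x - ((\sum_(i < n) x ord0 i) / n%:R) *: const_mx 1.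

(* exposure function g = grad G, taken modulo translation by all-ones *)
Definition exposure (R : realType) (n : nat) (G : 'rV[R]_n -> R) (p : 'rV[R]_n)
  : 'rV[R]_n := proj_sum0 (grad G p).

Definition convex_set_rV (R : realType) (n : nat) (S : set 'rV[R]_n) : Prop :=
  forall x y, S x -> S y -> forall t : R, 0 <= t <= 1 ->
    S (t *: x + (1 - t) *: y).

Definition has_convex_exposure (R : realType) (n : nat)
  (D : set 'rV[R]_n) (G : 'rV[R]_n -> R) : Prop :=
  convex_set_rV (exposure G @` D).

Definition G_log (R : realType) (n : nat) (p : 'rV[R]_n) : R :=
  \sum_(j < n) p ord0 j * ln (p ord0 j).
Definition G_negpow (R : realType) (n : nat) (gamma : R) (p : 'rV[R]_n) : R :=
  - \sum_(j < n) powR (p ord0 j) gamma.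
Definition G_pow (R : realType) (n : nat) (gamma : R) (p : 'rV[R]_n) : R :=
  \sum_(j < n) powR (p ord0 j) gamma.
Definition G_neglnsum (R : realType) (n : nat) (p : 'rV[R]_n) : R :=
  - \sum_(j < n) ln (p ord0 j).
Definition G_neggeo (R : realType) (n : nat) (p : 'rV[R]_n) : R :=
  - \prod_(j < n) powR (p ord0 j) (n%:R^-1).

(* Main.v *)
Require Import Defs.
From HB Require Import structures.
From mathcomp Require Import all_boot all_order all_algebra.
From mathcomp Require Import all_classical all_reals all_analysis.
From mathcomp Require Import ring lra.
Import Order.TTheory GRing.Theory Num.Theory.
Import numFieldNormedType.Exports.
Local Open Scope classical_set_scope.
Local Open Scope ring_scope.

Section S0.
Variables (R : realType) (n : nat).

Lemma is_derive_slice (f : 'rV[R]_n -> R) (x : 'rV[R]_n) j (g : R -> R) d :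
  (forall h, f (h *: delta_mx 0 j + x) = g (h + x ord0 j)) ->
  is_derive (x ord0 j) 1 g d -> is_derive x (delta_mx 0 j) f d.
Proof.
move=> fg [dg <-].
have E : (fun h : R => h^-1 *: ((f \o shift x) (h *: delta_mx 0 j) - f x)) =
         (fun h : R => h^-1 *: ((g \o shift (x ord0 j)) (h *: 1) - g (x ord0 j))).
  have f0 := fg 0; rewrite scale0r add0r add0r in f0.
  apply/funext => h /=; rewrite fg f0.
  by rewrite /GRing.scale /= mulr1.
split; first by rewrite /derivable E.
by rewrite /derive E.
Qed.

Lemma sum_slice (F : R -> R) (x : 'rV[R]_n) j h :
  \sum_(i < n) F ((h *: delta_mx 0 j + x) ord0 i) =
  F (h + x ord0 j) + \sum_(i < n | i != j) F (x ord0 i).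
Proof.
rewrite (bigD1 j) //=; congr (_ + _).
  by rewrite !mxE eqxx mulr1.
apply: eq_bigr => i ij; rewrite !mxE eq_sym (negbTE ij) /= mulr0 add0r.
by [].
Qed.

Lemma prod_slice (F : R -> R) (x : 'rV[R]_n) j h :
  \prod_(i < n) F ((h *: delta_mx 0 j + x) ord0 i) =
  F (h + x ord0 j) * \prod_(i < n | i != j) F (x ord0 i).
Proof.
rewrite (bigD1 j) //=; congr (_ * _).
  by rewrite !mxE eqxx mulr1.
apply: eq_bigr => i ij; rewrite !mxE eq_sym (negbTE ij) /= mulr0 add0r.
by [].
Qed.
End S0.

Section S1.
Variables (R : realType).

Lemma is_derive_ext (f g : R -> R) x v d : f =1 g -> is_derive x v f d -> is_derive x v g d.
Proof. by move=> /funext ->. Qed.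

Lemma d_xlnx (x C : R) : 0 < x -> is_derive x 1 (fun t => t * ln t + C) (ln x + 1).
Proof.
move=> x0.
have := is_deriveD (is_deriveM (is_derive_id x 1) (is_derive1_ln x0)) (is_derive_cst C x 1).
move/is_derive_ext => /(_ (fun t => t * ln t + C)) H.
apply: is_derive_eq; first by apply: H => t.
by rewrite /= addr0 /GRing.scale /= mulfV ?gt_eqF // mulr1 addrC.
Qed.

Lemma d_powR (x g : R) : 0 < x -> is_derive x 1 (@powR R ^~ g) (g * powR x (g - 1)).
Proof.
move=> x0; apply: DeriveDef; first by apply: (@derivable_powR R 1 g); rewrite in_itv /= x0.
by rewrite -derive1E powR_derive1 // in_itv /= x0.
Qed.

Lemma d_negpow (x g C : R) : 0 < x -> is_derive x 1 (fun t => - (@powR R t g + C)) (- (g * powR x (g - 1))).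
Proof.
move=> x0.
have := is_deriveN (is_deriveD (d_powR x g x0) (is_derive_cst C x 1)).
move/is_derive_ext => /(_ (fun t => - (@powR R t g + C))) H.
apply: is_derive_eq; first by apply: H => t.
by rewrite addr0.
Qed.

Lemma d_pow (x g C : R) : 0 < x -> is_derive x 1 (fun t => @powR R t g + C) (g * powR x (g - 1)).
Proof.
move=> x0.
have := is_deriveD (d_powR x g x0) (is_derive_cst C x 1).
move/is_derive_ext => /(_ (fun t => @powR R t g + C)) H.
apply: is_derive_eq; first by apply: H => t.
by rewrite addr0.
Qed.

Lemma d_negln (x C : R) : 0 < x -> is_derive x 1 (fun t => - (ln t + C)) (- x^-1).
Proof.
move=> x0.
have := is_deriveN (is_deriveD (is_derive1_ln x0) (is_derive_cst C x 1)).
move/is_derive_ext => /(_ (fun t => - (ln t + C))) H.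
apply: is_derive_eq; first by apply: H => t.
by rewrite addr0.
Qed.

Lemma d_neggeo (x g C : R) : 0 < x -> is_derive x 1 (fun t => - (@powR R t g * C)) (- (C * (g * powR x (g - 1)))).
Proof.
move=> x0.
have := is_deriveN (is_deriveM (d_powR x g x0) (is_derive_cst C x 1)).
move/is_derive_ext => /(_ (fun t => - (@powR R t g * C))) H.
apply: is_derive_eq; first by apply: H => t.
by rewrite /GRing.scale /= mulr0 add0r.
Qed.
End S1.

Section S2.
Variables (R : realType) (n : nat).
Implicit Types p : 'rV[R]_n.

Lemma grad_log p : (forall i, 0 < p ord0 i) ->
  grad (@G_log R n) p = \row_j (ln (p ord0 j) + 1).
Proof.
move=> p0; apply/rowP => j; rewrite !mxE.
have H : is_derive p (delta_mx 0 j) (@G_log R n) (ln (p ord0 j) + 1).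
  apply: (@is_derive_slice R n _ p j (fun t => t * ln t + \sum_(i < n | i != j) p ord0 i * ln (p ord0 i))).
    by move=> h; rewrite /G_log (@sum_slice R n (fun t => t * ln t)).
  exact: d_xlnx.
by case: H.
Qed.

Lemma grad_negpow g p : (forall i, 0 < p ord0 i) ->
  grad (@G_negpow R n g) p = \row_j (- (g * powR (p ord0 j) (g - 1))).
Proof.
move=> p0; apply/rowP => j; rewrite !mxE.
have H : is_derive p (delta_mx 0 j) (@G_negpow R n g) (- (g * powR (p ord0 j) (g - 1))).
  apply: (@is_derive_slice R n _ p j (fun t => - (@powR R t g + \sum_(i < n | i != j) powR (p ord0 i) g))).
    by move=> h; rewrite /G_negpow (@sum_slice R n (fun t => powR t g)).
  exact: d_negpow.
by case: H.
Qed.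

Lemma grad_pow g p : (forall i, 0 < p ord0 i) ->
  grad (@G_pow R n g) p = \row_j (g * powR (p ord0 j) (g - 1)).
Proof.
move=> p0; apply/rowP => j; rewrite !mxE.
have H : is_derive p (delta_mx 0 j) (@G_pow R n g) (g * powR (p ord0 j) (g - 1)).
  apply: (@is_derive_slice R n _ p j (fun t => @powR R t g + \sum_(i < n | i != j) powR (p ord0 i) g)).
    by move=> h; rewrite /G_pow (@sum_slice R n (fun t => powR t g)).
  exact: d_pow.
by case: H.
Qed.

Lemma grad_neglnsum p : (forall i, 0 < p ord0 i) ->
  grad (@G_neglnsum R n) p = \row_j (- (p ord0 j)^-1).
Proof.
move=> p0; apply/rowP => j; rewrite !mxE.
have H : is_derive p (delta_mx 0 j) (@G_neglnsum R n) (- (p ord0 j)^-1).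
  apply: (@is_derive_slice R n _ p j (fun t => - (ln t + \sum_(i < n | i != j) ln (p ord0 i)))).
    by move=> h; rewrite /G_neglnsum (@sum_slice R n (@ln R)).
  exact: d_negln.
by case: H.
Qed.

Lemma grad_neggeo p : (forall i, 0 < p ord0 i) ->
  grad (@G_neggeo R n) p = \row_j (- ((\prod_(i < n | i != j) powR (p ord0 i) n%:R^-1) *
        (n%:R^-1 * powR (p ord0 j) (n%:R^-1 - 1)))).
Proof.
move=> p0; apply/rowP => j; rewrite !mxE.
set C := \prod_(i < n | i != j) _.
have H : is_derive p (delta_mx 0 j) (@G_neggeo R n) (- (C * (n%:R^-1 * powR (p ord0 j) (n%:R^-1 - 1)))).
  apply: (@is_derive_slice R n _ p j (fun t => - (@powR R t n%:R^-1 * C))).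
    by move=> h; rewrite /G_neggeo (@prod_slice R n (fun t => powR t n%:R^-1)).
  exact: d_neggeo.
by case: H.
Qed.
End S2.

Section S3.
Variables (R : realType) (n : nat).
Implicit Types p : 'rV[R]_n.

Lemma sum_add1 (z : 'rV[R]_n) c :
  \sum_(i < n) (z + c *: const_mx 1) ord0 i = \sum_(i < n) z ord0 i + c *+ n.
Proof.
rewrite (eq_bigr (fun i => z ord0 i + c)); last by move=> i _; rewrite !mxE mulr1.
by rewrite big_split /= sumr_const card_ord.
Qed.

Lemma proj_shift (n0 : (0 < n)%N) (z : 'rV[R]_n) c :
  \sum_(i < n) z ord0 i = 0 -> proj_sum0 (z + c *: const_mx 1) = z.
Proof.
move=> z0; rewrite /proj_sum0 sum_add1 z0 add0r.
have nz : n%:R != 0 :> R by rewrite pnatr_eq0 -lt0n.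
by rewrite -mulr_natr mulfK // addrK.
Qed.

Lemma sum_proj (n0 : (0 < n)%N) (z : 'rV[R]_n) : \sum_(i < n) proj_sum0 z ord0 i = 0.
Proof.
rewrite /proj_sum0 -scaleNr.
rewrite sum_add1.
have nz : n%:R != 0 :> R by rewrite pnatr_eq0 -lt0n.
by rewrite mulNrn -[_ *+ n]mulr_natr mulfVK // subrr.
Qed.

Lemma conv_of_surj (G : 'rV[R]_n -> R) :
  ((0 < n)%N -> forall y : 'rV[R]_n, \sum_(i < n) y ord0 i = 0 ->
     exists2 p, int_simplex p & exists c, grad G p = y + c *: const_mx 1) ->
  has_convex_exposure (@int_simplex R n) G.
Proof.
move=> surj x y [p [_ Dp] <-] [q _ <-] t t01.
have n0 : (0 < n)%N.
  rewrite lt0n; apply/eqP => n0; move: Dp; rewrite big1 => [|i _].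
    by move/eqP; rewrite eq_sym oner_eq0.
  exfalso; have := ltn_ord i; move: (nat_of_ord i) => k; by rewrite n0.
set z := _ + _.
have z0 : \sum_(i < n) z ord0 i = 0.
  rewrite /z (eq_bigr (fun i => t * exposure G p ord0 i + (1 - t) * exposure G q ord0 i)).
    by rewrite big_split /= -!mulr_sumr /exposure !sum_proj // !mulr0 addr0.
  by move=> i _; rewrite !mxE.
have [r Dr [c rc]] := surj n0 z z0.
by exists r => //; rewrite /exposure rc proj_shift.
Qed.
End S3.

Section S4.
Variables (R : realType) (n : nat).
Implicit Types p : 'rV[R]_n.

Lemma cont_sum (I : Type) (s : seq I) (f : I -> R -> R) x :
  (forall i, {for x, continuous (f i)}) ->
  {for x, continuous (fun t => \sum_(i <- s) f i t)}.
Proof.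
move=> fc; elim: s => [|a s IH].
  have -> : (fun t => \sum_(i <- [::]) f i t) = cst 0 by apply/funext=> t; rewrite big_nil.
  exact: cst_continuous.
have -> : (fun t => \sum_(i <- a :: s) f i t) = f a + (fun t => \sum_(i <- s) f i t).
  by apply/funext=> t; rewrite big_cons.
exact: continuousD.
Qed.

Lemma cont_prod (I : Type) (s : seq I) (f : I -> R -> R) x :
  (forall i, {for x, continuous (f i)}) ->
  {for x, continuous (fun t => \prod_(i <- s) f i t)}.
Proof.
move=> fc; elim: s => [|a s IH].
  have -> : (fun t => \prod_(i <- [::]) f i t) = cst 1 by apply/funext=> t; rewrite big_nil.
  exact: cst_continuous.
have -> : (fun t => \prod_(i <- a :: s) f i t) = f a \* (fun t => \prod_(i <- s) f i t).
  by apply/funext=> t; rewrite big_cons.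
exact: continuousM.
Qed.

Lemma cont_affine (d k x : R) : {for x, continuous (fun t : R => (t + d) / k)}.
Proof.
apply: (@continuousM _ _ (fun t : R => t + d) (cst k^-1)); last exact: cst_continuous.
apply: (@continuousD _ _ _ id (cst d)); last exact: cst_continuous.
by [].
Qed.

Lemma cont_powR (e u : R) : 0 < u -> {for u, continuous (@powR R ^~ e)}.
Proof.
move=> u0; have [dv _] := @d_powR R u e u0.
by apply/differentiable_continuous/derivable1_diffP.
Qed.

Lemma argmax_ex (n0 : (0 < n)%N) (y : 'rV[R]_n) :
  exists j0, forall i, y ord0 i <= y ord0 j0.
Proof.
have := @arg_maxP _ _ _ (Ordinal n0) xpredT (fun i => y ord0 i) isT.
case=> j _ H; exists j => i; exact: H.
Qed.
End S4.

Section S5.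
Variables (R : realType) (n : nat).
Implicit Types p : 'rV[R]_n.

Lemma surj_pow (n0 : (0 < n)%N) (k a : R) : 0 < k -> 0 < a ->
  forall y : 'rV[R]_n, exists2 p, int_simplex p &
    exists c, forall j, - k * powR (p ord0 j) (- a) = y ord0 j + c.
Proof.
move=> k0 a0 y.
have [j0 Hj0] := @argmax_ex R n n0 y.
set M := y ord0 j0.
pose d i := M - y ord0 i.
have d0 i : 0 <= d i by rewrite subr_ge0.
pose b := a^-1.
have b0 : 0 < b by rewrite invr_gt0.
pose P s i := @powR R ((s + d i) / k) (- b).
pose h s := \sum_(i < n) P s i.
have hk : 1 <= h k.
  rewrite /h (bigD1 j0) //= /P /d subrr addr0 divff ?gt_eqF // powR1 /=.
  by rewrite lerDl sumr_ge0 // => i _; exact: powR_ge0.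
have n1 : 1 <= n%:R :> R by rewrite ler1n.
pose s1 := k * powR n%:R a.
have pna : 1 <= powR n%:R a.
  have := @ge0_ler_powR R a (ltW a0) 1 n%:R; rewrite powR1 /=.
  by apply; rewrite ?nnegrE ?ler01 ?ler0n.
have ks1 : k <= s1 by rewrite /s1 ler_peMr ?(ltW k0).
have s10 : 0 < s1 by lra.
have hs1 : h s1 <= 1.
  have : h s1 <= \sum_(i < n) n%:R^-1.
    apply: ler_sum => i _; rewrite /P powRN.
    have u0 : 0 < (s1 + d i) / k.
      rewrite divr_gt0 //; have := d0 i; lra.
    rewrite lef_pV2 ?posrE ?powR_gt0 //; last lra.
    have -> : n%:R = powR (powR n%:R a) b :> R.
      by rewrite -powRrM mulfV ?gt_eqF // powRr1 // ler0n.
    apply: (@ge0_ler_powR R b (ltW b0)); rewrite ?nnegrE ?powR_ge0 ?(ltW u0) //.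
    by rewrite ler_pdivlMr // mulrC /s1 lerDl d0.
  by rewrite sumr_const card_ord -[_ *+ n]mulr_natr mulVf // gt_eqF //; lra.
have cont : {within `[k, s1], continuous h}.
  apply: continuous_in_subspaceT => t; rewrite inE /= in_itv /= => /andP [kt _].
  apply: cont_sum => i.
  apply: (@continuous_comp _ _ _ (fun s => (s + d i) / k) (@powR R ^~ (- b))).
    exact: cont_affine.
  apply: cont_powR; rewrite divr_gt0 //; have := d0 i; lra.
have hv : Num.min (h k) (h s1) <= 1 <= Num.max (h k) (h s1).
  by rewrite ge_min le_max hs1 hk !orbT.
have [s sI hs] := IVT ks1 cont hv.
have ks : k <= s by move: sI; rewrite in_itv /= => /andP [].
have u0 i : 0 < (s + d i) / k by rewrite divr_gt0 //; have := d0 i; lra.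
exists (\row_j P s j).
  split; first by move=> i; rewrite mxE powR_gt0.
  by rewrite -hs /h; apply: eq_bigr => i _; rewrite mxE.
exists (- (s + M)) => j; rewrite mxE /P -powRrM mulrNN mulVf ?gt_eqF // powRr1 ?(ltW (u0 j)) //.
rewrite /d; field; lra.
Qed.
End S5.

Section S6.
Variables (R : realType) (n : nat).
Implicit Types p : 'rV[R]_n.

Lemma prod_powR (f : 'I_n -> R) r : (forall i, 0 <= f i) ->
  \prod_(i < n) powR (f i) r = powR (\prod_(i < n) f i) r.
Proof.
move=> f0.
suff [] : (\prod_(i < n) powR (f i) r = powR (\prod_(i < n) f i) r) /\ 0 <= \prod_(i < n) f i by [].
apply: (big_ind2 (fun a b => a = powR b r /\ 0 <= b)).
- by rewrite powR1.
- by move=> a1 a2 b1 b2 [-> h1] [-> h2]; rewrite powRM // mulr_ge0.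
- by move=> i _; split.
Qed.

Lemma surj_log (n0 : (0 < n)%N) (y : 'rV[R]_n) : exists2 p, int_simplex p &
    exists c, forall j, ln (p ord0 j) + 1 = y ord0 j + c.
Proof.
pose Z := \sum_(i < n) expR (y ord0 i).
have Z0 : 0 < Z.
  rewrite /Z (bigD1 (Ordinal n0)) //=; apply: (lt_le_trans (expR_gt0 (y ord0 (Ordinal n0)))).
  by rewrite lerDl sumr_ge0 // => i _; exact: ltW (expR_gt0 _).
exists (\row_j (expR (y ord0 j) / Z)).
  split; first by move=> i; rewrite mxE divr_gt0 // expR_gt0.
  rewrite (eq_bigr (fun i => expR (y ord0 i) / Z)); last by move=> i _; rewrite mxE.
  by rewrite -mulr_suml -/Z divff // gt_eqF.
exists (1 - ln Z) => j; rewrite mxE lnM ?posrE ?expR_gt0 ?invr_gt0 // lnV ?posrE // expRK.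
ring.
Qed.

Lemma surj_geo (n0 : (0 < n)%N) (y : 'rV[R]_n) : exists2 p, int_simplex p &
    exists c, forall j,
     - ((\prod_(i < n | i != j) powR (p ord0 i) n%:R^-1) *
        (n%:R^-1 * powR (p ord0 j) (n%:R^-1 - 1))) = y ord0 j + c.
Proof.
have [j0 Hj0] := @argmax_ex R n n0 y.
set M := y ord0 j0.
pose d i := M - y ord0 i.
have d0 i : 0 <= d i by rewrite subr_ge0.
have nR0 : 0 < n%:R :> R by rewrite ltr0n.
pose m := n%:R^-1 : R.
have m0 : 0 < m by rewrite invr_gt0.
pose phi s := \prod_(i < n) (s + d i).
have phi0 : phi 0 = 0.
  by rewrite /phi (bigD1 j0) //= /d subrr addr0 mul0r.
have phim : m ^+ n <= phi m.
  rewrite /phi -[n in m ^+ n]card_ord -prodr_const; apply: ler_prod => i _.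
  by rewrite (ltW m0) lerDl d0.
have cont : {within `[0, m], continuous phi}.
  apply: continuous_subspaceT => t.
  apply: cont_prod => i.
  apply: (@continuousD _ _ _ id (cst (d i))); last exact: cst_continuous.
  by [].
have hv : Num.min (phi 0) (phi m) <= m ^+ n <= Num.max (phi 0) (phi m).
  by rewrite ge_min le_max phi0 phim exprn_ge0 ?(ltW m0) ?orbT.
have [s sI hs] := IVT (ltW m0) cont hv.
have mn0 : 0 < m ^+ n by rewrite exprn_gt0.
have s0 : 0 < s.
  have : 0 <= s by move: sI; rewrite in_itv /= => /andP [].
  rewrite le_eqVlt => /predU1P [s0|//].
  by move: hs; rewrite -s0 phi0 => mn; rewrite mn ltxx in mn0.
pose w i := s + d i.
have w0 i : 0 < w i by rewrite /w; have := d0 i; lra.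
pose lam := (\sum_(i < n) (w i)^-1)^-1.
have sw0 : 0 < \sum_(i < n) (w i)^-1.
  rewrite (bigD1 (Ordinal n0)) //=.
  apply: (lt_le_trans (_ : 0 < (w (Ordinal n0))^-1)); first by rewrite invr_gt0.
  by rewrite lerDl sumr_ge0 // => i _; rewrite invr_ge0 ltW.
have lam0 : 0 < lam by rewrite invr_gt0.
pose p := \row_j (lam / w j) : 'rV[R]_n.
have pE j : p ord0 j = lam / w j by rewrite mxE.
have p0 j : 0 < p ord0 j by rewrite pE divr_gt0.
exists p.
  split => //.
  rewrite (eq_bigr (fun i => lam * (w i)^-1)); last by move=> i _; rewrite pE.
  by rewrite -mulr_sumr mulVf // gt_eqF.
exists (- (s + M)) => j.
have g : \prod_(i < n) powR (p ord0 i) m = lam / m.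
  rewrite prod_powR; last by move=> i; exact: ltW (p0 i).
  have -> : \prod_(i < n) p ord0 i = (lam / m) ^+ n.
    rewrite (eq_bigr (fun i => lam * (w i)^-1)); last by move=> i _; rewrite pE.
    rewrite big_split /= prodr_const card_ord prodfV.
    have -> : \prod_(i < n) w i = m ^+ n by exact: hs.
    by rewrite expr_div_n.
  have lm0 : 0 <= lam / m by rewrite divr_ge0 // ltW.
  rewrite -powR_mulrn // -powRrM mulfV ?gt_eqF // powRr1 //.
have Pm0 : powR (p ord0 j) m != 0 by rewrite gt_eqF // powR_gt0.
have -> : \prod_(i < n | i != j) powR (p ord0 i) m = (lam / m) / powR (p ord0 j) m.
  by rewrite -g [in RHS](bigD1 j) //= mulrC mulKf.
have -> : powR (p ord0 j) (m - 1) = powR (p ord0 j) m / p ord0 j.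
  rewrite powRB ?powRr1 ?(ltW (p0 j)) //; by apply/implyP => _; rewrite gt_eqF.
move: Pm0; rewrite pE /w /d => Pm0.
have w0' := w0 j; rewrite /w /d in w0'.
rewrite -/m.
move: Pm0; set X := powR _ m => X0.
have mz : m != 0 by rewrite gt_eqF.
have lz : lam != 0 by rewrite gt_eqF.
have wz : s + (M - y ord0 j) != 0 by rewrite gt_eqF.
clearbody X m lam; field.
by rewrite X0 mz lz wz.
Qed.
End S6.

Local Close Scope classical_set_scope.

Theorem corollaryF2 (R : realType) (n : nat) :
  has_convex_exposure (@int_simplex R n) (@G_log R n) /\
  (forall gamma : R, 0 < gamma < 1 ->
     has_convex_exposure (@int_simplex R n) (@G_negpow R n gamma)) /\
  (forall gamma : R, gamma < 0 ->
     has_convex_exposure (@int_simplex R n) (@G_pow R n gamma)) /\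
  has_convex_exposure (@int_simplex R n) (@G_neglnsum R n) /\
  has_convex_exposure (@int_simplex R n) (@G_neggeo R n).
Proof.
split.
  apply: conv_of_surj => n0 y _.
  have [p Dp [c Hc]] := @surj_log R n n0 y.
  exists p => //; exists c; rewrite grad_log; last by case: Dp.
  by apply/rowP => j; rewrite !mxE Hc mulr1.
split.
  move=> g /andP [g0 g1]; apply: conv_of_surj => n0 y _.
  have [p Dp [c Hc]] := @surj_pow R n n0 g (1 - g) g0 (ltac:(lra)) y.
  exists p => //; exists c; rewrite grad_negpow; last by case: Dp.
  by apply/rowP => j; rewrite !mxE -mulNr -(opprB 1 g) Hc mulr1.
split.
  move=> g g0; apply: conv_of_surj => n0 y _.
  have [p Dp [c Hc]] := @surj_pow R n n0 (- g) (1 - g) (ltac:(lra)) (ltac:(lra)) y.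
  exists p => //; exists c; rewrite grad_pow; last by case: Dp.
  by apply/rowP => j; rewrite !mxE -(opprB 1 g) -[g in g * _]opprK Hc mulr1.
split.
  apply: conv_of_surj => n0 y _.
  have [p Dp [c Hc]] := @surj_pow R n n0 1 1 ltr01 ltr01 y.
  exists p => //; exists c; rewrite grad_neglnsum; last by case: Dp.
  apply/rowP => j; rewrite !mxE mulr1 -Hc powR_inv1 ?mulN1r //.
  by case: Dp => Dp _; exact: ltW.
apply: conv_of_surj => n0 y _.
have [p Dp [c Hc]] := @surj_geo R n n0 y.
exists p => //; exists c; rewrite grad_neggeo; last by case: Dp.
by apply/rowP => j; rewrite !mxE Hc mulr1.
Qed.
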